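(* Under the setup in the context, assume $V_M^TV_A=I$. Let $\psi^{(k)}_j$ be defined by $\psi^{(0)}_j=0$ and $\psi_j^{(k)} = \psi_j^{(k-1)} + \frac{\sigma_{A,j}^2}{\sigma^2_{M,j}+\alpha^2}\big(1-\frac{\sigma_{A,j}^2}{\sigma^2_{M,j}+\alpha^2}\big)^{k-1}$ for $k\ge1$. Define $\phi^{(0)}_j=0$ and, for $k\ge1$, $$\phi_{j}^{(k)} = \phi_{j}^{(k-1)} + \left(\sigma_{M,j}^2+\alpha^2\right)^{-1}\Big[\left(\sigma_{M,j}^2+\alpha^2\right)\big(\psi_j^{(k)}-\psi_j^{(k-1)}\big) + \Delta^{(k)}_j -\alpha^2\phi^{(k-1)}_{j}\Big],$$ where $$\Delta^{(k)}_j = \frac{\alpha^2\sigma_{A,j}^2}{\sigma_{M,j}^2+\alpha^2}\sum_{i=0}^{k-2}\left(1-\frac{\sigma_{A,j}^2}{\sigma_{M,j}^2+\alpha^2}\right)^i\phi_{j}^{(k-2-i)}$$ (empty sum $=0$). Then for every $k\ge0$, $$x^{(k)}_{IR} = \sum_{j=1}^n \phi_j^{(k)}\frac{u^T_{A,j}b}{\sigma_{A,j}}v_{M,j}.$$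
   Context: Let $m\ge n$ and $A\in\mathbb{R}^{m\times n}$ with singular value decomposition $A=U_A\Sigma_AV_A^T$, where $U_A\in\mathbb{R}^{m\times m}$, $V_A\in\mathbb{R}^{n\times n}$ are orthogonal with columns $u_{A,j}$, $v_{A,j}$, and $\Sigma_A\in\mathbb{R}^{m\times n}$ is diagonal with diagonal entries $\sigma_{A,1}\ge\dots\ge\sigma_{A,n}>0$. Let $b\in\mathbb{R}^m$ and $\alpha>0$. Let $V_M\in\mathbb{R}^{n\times n}$ be orthogonal with columns $v_{M,j}$, let $\sigma_{M,1},\dots,\sigma_{M,n}\ge 0$ be given reals, let $D_M=\mathrm{diag}(d_{M,1},\dots,d_{M,n})$ with $d_{M,j}=(\sigma_{M,j}^2+\alpha^2)^{1/2}$, and let $M=D_MV_M^T$. The iterative refinement iterates for the Tikhonov problem are $x^{(0)}_{IR}=0$ and $x^{(k)}_{IR} = x^{(k-1)}_{IR} + (M^TM)^{-1}A^T(b-Ax^{(k-1)}_{IR}) - \alpha^2 (M^TM)^{-1}x^{(k-1)}_{IR}$ for $k\ge1$. (The paper intends the bracketed quantity to be computed in a high precision and the preconditioner in a low precision; the statement here is the exact-arithmetic identity.) *)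

(* Defs.v *)
From HB Require Import structures.
From mathcomp Require Import all_boot all_order all_algebra.
Set Implicit Arguments. Unset Strict Implicit. Unset Printing Implicit Defensive.
Import Order.TTheory GRing.Theory Num.Theory.
Local Open Scope ring_scope.

Definition rdiag_mx (R : nzRingType) (m n : nat) (s : 'I_n -> R) : 'M[R]_(m, n) :=
  \matrix_(i < m, j < n) (if (i : nat) == (j : nat) then s j else 0).

Definition DM (R : rcfType) (n : nat) (sM : 'I_n -> R) (alpha : R) : 'M[R]_n :=
  diag_mx (\row_j Num.sqrt (sM j ^+ 2 + alpha ^+ 2)).

Definition Mmat (R : rcfType) (n : nat) (VM : 'M[R]_n) (sM : 'I_n -> R) (alpha : R)
  : 'M[R]_n := DM sM alpha *m VM^T.

Fixpoint xIR (R : rcfType) (m n : nat) (A : 'M[R]_(m, n)) (b : 'cV[R]_m)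
  (M : 'M[R]_n) (alpha : R) (k : nat) : 'cV[R]_n :=
  match k with
  | 0 => 0
  | k'.+1 =>
      let x := xIR A b M alpha k' in
      let P := invmx (M^T *m M) in
      x + P *m (A^T *m (b - A *m x)) - alpha ^+ 2 *: (P *m x)
  end.

(* psi^(k) with ratio r = sigma_{A,j}^2 / (sigma_{M,j}^2 + alpha^2):
   psi^(0) = 0,  psi^(k) = psi^(k-1) + r (1 - r)^(k-1). *)
Fixpoint psi (R : nzRingType) (r : R) (k : nat) : R :=
  match k with
  | 0 => 0
  | k'.+1 => psi r k' + r * (1 - r) ^+ k'
  end.

(* phis d2 r a2 k = [:: phi^(0); ...; phi^(k)], where d2 = sigma_{M,j}^2 + alpha^2,
   r = sigma_{A,j}^2 / d2, a2 = alpha^2.  For k = k'+1: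
   phi^(k) = phi^(k-1) + d2^-1 [ d2 (psi^(k) - psi^(k-1)) + Delta^(k) - a2 phi^(k-1) ],
   Delta^(k) = (a2 * sigma_{A,j}^2 / d2) * \sum_{i=0}^{k-2} (1-r)^i phi^(k-2-i). *)
Fixpoint phis (R : fieldType) (d2 r a2 : R) (k : nat) : seq R :=
  match k with
  | 0 => [:: 0]
  | k'.+1 =>
      let s := phis d2 r a2 k' in
      let prev := fun i => nth 0 s i in
      let Delta := a2 * r * \sum_(i < k') (1 - r) ^+ i * prev (k' - 1 - i)%N in
      rcons s (prev k' + d2^-1 * (d2 * (psi r k'.+1 - psi r k') + Delta - a2 * prev k'))
  end.

Definition phi (R : fieldType) (d2 r a2 : R) (k : nat) : R := nth 0 (phis d2 r a2 k) k.

Definition phij (R : fieldType) (n : nat) (sA sM : 'I_n -> R) (alpha : R) (j : 'I_n) (k : nat) : R :=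
  let d2 := sM j ^+ 2 + alpha ^+ 2 in
  phi d2 (sA j ^+ 2 / d2) (alpha ^+ 2) k.

(* Main.v *)
Require Import Defs.
From HB Require Import structures.
From mathcomp Require Import all_boot all_order all_algebra.
From mathcomp Require Import zify ring lra.
Import Order.TTheory GRing.Theory Num.Theory.
Local Open Scope ring_scope.

Lemma phis_size (R : fieldType) (d2 r a2 : R) k : size (phis d2 r a2 k) = k.+1.
Proof. by elim: k => [|k IH] //=; rewrite size_rcons IH. Qed.

Lemma phis_nth (R : fieldType) (d2 r a2 : R) k i : (i <= k)%N ->
  nth 0 (phis d2 r a2 k) i = phi d2 r a2 i.
Proof.
elim: k => [|k IH]; first by rewrite leqn0 => /eqP ->.
rewrite leq_eqVlt => /orP [/eqP ->|Hi] //.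
rewrite /= nth_rcons phis_size Hi IH //.
Qed.

Lemma phiS_raw (R : fieldType) (d2 r a2 : R) k :
  phi d2 r a2 k.+1 = phi d2 r a2 k + d2^-1 * (d2 * (r * (1 - r) ^+ k)
     + a2 * r * \sum_(i < k) (1 - r) ^+ i * phi d2 r a2 (k - 1 - i)%N
     - a2 * phi d2 r a2 k).
Proof.
rewrite {1}/phi /= nth_rcons phis_size ltnn eqxx.
rewrite phis_nth //. idtac.
have E : forall x y : R, x + y - x = y by move=> x y; rewrite addrAC subrr add0r.
rewrite E. congr (_ + _ * (_ + _ * _ - _)). apply: eq_bigr => i _.
rewrite phis_nth //; lia.
Qed.

Lemma phiS (R : fieldType) (d2 r a2 : R) k : d2 != 0 ->
  phi d2 r a2 k.+1 = phi d2 r a2 k + r * (1 - phi d2 r a2 k) - a2 / d2 * phi d2 r a2 k.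
Proof.
move=> d0.
set p := phi d2 r a2.
pose S k := \sum_(i < k) (1 - r) ^+ i * p (k - 1 - i)%N.
have SS : forall k, S k.+1 = p k + (1 - r) * S k.
  move=> j; rewrite /S big_ord_recl /= expr0 mul1r subn0 subn1 /=.
  congr (_ + _); rewrite mulr_sumr; apply: eq_bigr => i _.
  rewrite exprS -mulrA; congr (_ * (_ * p _)); rewrite /bump /=; lia.
have pS : forall k, p k.+1 = p k + r * ((1 - r) ^+ k + a2 / d2 * S k) - a2 / d2 * p k.
  move=> j; rewrite /p phiS_raw -/p -/(S j); field; done.
have G : forall k, (1 - r) ^+ k + a2 / d2 * S k = 1 - p k.
  elim=> [|j IH]; first by rewrite /S big_ord0 mulr0 addr0 expr0 /p /phi /= subr0.
  rewrite pS SS exprS.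
  have -> : (1 - r) * (1 - r) ^+ j = (1 - r) * (1 - p j - a2 / d2 * S j) by rewrite -IH; ring.
  rewrite IH; ring.
by rewrite (pS k) (G k).
Qed.

Theorem theorem2 (R : rcfType) (m n : nat) (Hmn : (n <= m)%N)
  (A : 'M[R]_(m, n)) (UA : 'M[R]_m) (VA : 'M[R]_n) (sA : 'I_n -> R)
  (b : 'cV[R]_m) (alpha : R) (VM : 'M[R]_n) (sM : 'I_n -> R) :
  UA^T *m UA = 1%:M ->
  VA^T *m VA = 1%:M ->
  (forall i j : 'I_n, (i <= j)%N -> sA j <= sA i) ->
  (forall j : 'I_n, 0 < sA j) ->
  A = UA *m rdiag_mx m sA *m VA^T ->
  0 < alpha ->
  VM^T *m VM = 1%:M ->
  (forall j : 'I_n, 0 <= sM j) ->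
  VM^T *m VA = 1%:M ->
  forall k : nat,
    xIR A b (Mmat VM sM alpha) alpha k =
    \sum_(j < n) (phij sA sM alpha j k *
                   (((col (widen_ord Hmn j) UA)^T *m b) 0 0 / sA j)) *: col j VM.
Proof.
move=> HU _ _ HsA HA Ha HVM HsM HVMA k.
have HVM' : VM *m VM^T = 1%:M by apply: mulmx1C.
have EVA : VA = VM by rewrite -[VA]mul1mx -HVM' -mulmxA HVMA mulmx1.
subst VA.
set S := rdiag_mx m sA.
set d2 := fun j : 'I_n => sM j ^+ 2 + alpha ^+ 2.
have d2p : forall j, 0 < d2 j.
  move=> j; rewrite /d2; apply: ltr_wpDl; first exact: sqr_ge0.
  by rewrite exprn_gt0.
set Dinv := diag_mx (\row_j (d2 j)^-1).
have HP : invmx ((Mmat VM sM alpha)^T *m Mmat VM sM alpha) = VM *m Dinv *m VM^T.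
  have E : (Mmat VM sM alpha)^T *m Mmat VM sM alpha = VM *m diag_mx (\row_j d2 j) *m VM^T.
    rewrite /Mmat /DM trmx_mul trmxK tr_diag_mx !mulmxA -[VM *m _ *m diag_mx _]mulmxA mulmx_diag.
    congr (_ *m diag_mx _ *m _); apply/matrixP => i j; rewrite !mxE -expr2 sqr_sqrtr //.
    by apply: addr_ge0; apply: sqr_ge0.
  have E1 : (VM *m diag_mx (\row_j d2 j) *m VM^T) *m (VM *m Dinv *m VM^T) = 1%:M.
    rewrite !mulmxA -[_ *m VM^T *m VM]mulmxA HVM mulmx1 -[VM *m _ *m Dinv]mulmxA mulmx_diag.
    have -> : diag_mx (\row_j ((\row_j0 d2 j0) 0 j * (\row_j0 (d2 j0)^-1) 0 j)) = 1%:M :> 'M[R]_n.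
      apply/matrixP => i j; rewrite !mxE; case: (i == j) => //=.
      by rewrite mulfV // gt_eqF.
    by rewrite mulmx1 HVM'.
  have [U1 _] := mulmx1_unit E1.
  rewrite E; move: U1 E1; set X := VM *m _ *m _; set Y := VM *m _ *m _ => U1 E1.
  by rewrite -[invmx X]mulmx1 -E1 mulmxA mulVmx // mul1mx.
set c := fun j : 'I_n => ((col (widen_ord Hmn j) UA)^T *m b) 0 0.
set w := fun k => \col_(j < n) (phij sA sM alpha j k * (c j / sA j)).
have -> : \sum_(j < n) (phij sA sM alpha j k * (c j / sA j)) *: col j VM = VM *m w k.
  apply/matrixP => i j; rewrite ord1 summxE !mxE; apply: eq_bigr => l _.
  by rewrite !mxE mulrC.
elim: k => [|k IH].
  apply/matrixP=> i j; rewrite !mxE big1 // => l _.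
  by rewrite !mxE /phij /phi /= mul0r mulr0.
have sigT : forall (y : 'cV[R]_m) (i : 'I_n), (S^T *m y) i 0 = sA i * y (widen_ord Hmn i) 0.
  move=> y i; rewrite mxE (bigD1 (widen_ord Hmn i)) //= big1 ?addr0.
    by rewrite !mxE /= eqxx.
  move=> l Hl; rewrite !mxE; case: eqP => [E|]; last by rewrite mul0r.
  by exfalso; move/eqP: Hl; apply; apply: val_inj => /=; lia.
have sigw : forall (y : 'cV[R]_n) (i : 'I_n), (S *m y) (widen_ord Hmn i) 0 = sA i * y i 0.
  move=> y i; rewrite mxE (bigD1 i) //= big1 ?addr0.
    by rewrite !mxE /= eqxx.
  move=> l Hl; rewrite !mxE /=; case: eqP => [E|]; last by rewrite mul0r.
  by exfalso; move/eqP: Hl; apply; apply: val_inj => /=; lia.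
have HAx : forall y : 'cV[R]_n, A *m (VM *m y) = UA *m (S *m y).
  by move=> y; rewrite HA -!mulmxA (mulmxA VM^T) HVM mul1mx.
have HAt : forall z : 'cV[R]_m, invmx ((Mmat VM sM alpha)^T *m Mmat VM sM alpha) *m (A^T *m z)
     = VM *m (Dinv *m (S^T *m (UA^T *m z))).
  move=> z; rewrite HP HA !trmx_mul trmxK -!mulmxA (mulmxA VM^T) HVM mul1mx //.
have HPx : forall y : 'cV[R]_n, invmx ((Mmat VM sM alpha)^T *m Mmat VM sM alpha) *m (VM *m y)
     = VM *m (Dinv *m y).
  by move=> y; rewrite HP -!mulmxA (mulmxA VM^T) HVM mul1mx.
rewrite /= IH HAx HAt HPx mulmxBr (mulmxA UA^T) HU mul1mx scalemxAr -mulmxDr -mulmxBr.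
congr (VM *m _); apply/matrixP => i j; rewrite ord1 {j}.
rewrite /Dinv !mul_diag_mx !(sigT, sigw, mxE).
have Hc : \sum_j UA^T (widen_ord Hmn i) j * b j 0 = c i.
  by rewrite /c mxE; apply: eq_bigr => l _; rewrite !mxE.
have d0 : d2 i != 0 by rewrite gt_eqF.
have s0 : sA i != 0 by rewrite gt_eqF.
move: d0; rewrite Hc /phij /d2 /= => d0.
rewrite phiS //.
by field; rewrite d0 s0.
Qed.
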